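(* Assume $\mathrm{recc}(C)\subseteq\mathrm{recc}(P^B)$ and fix $k\in N_2$. If $N_0\subseteq J$, then there exists $\epsilon>0$ such that $\bar x+\epsilon\bar r^j\in S_k^C$ for all $j\in N$.
   Context: Let $A\in\mathbb{R}^{m\times n}$ have full row rank, $b\in\mathbb{R}^m$, and $P=\{x\in\mathbb{R}^n_+:Ax=b\}$. Let $C\subseteq\mathbb{R}^n$ be an open convex set. Fix a basis $B$ of $P$ with nonbasic set $N=\{1,\dots,n\}\setminus B$. Write $P=\{x:x_i=\bar b_i-\sum_{j\in N}\bar a_{ij}x_j\ (i\in B),\ x\ge0\}$ with $\bar b\ge0$. The basic solution $\bar x$ has $\bar x_i=\bar b_i$ ($i\in B$) and $0$ ($i\in N$). $P^B$ is obtained by dropping $x_i\ge0$ for $i\in B$. For $j\in N$, $\bar r^j$ has $\bar r^j_k=-\bar a_{kj}$ ($k\in B$), $\bar r^j_j=1$, and $0$ otherwise. Thus $P^B=\{\bar x+\sum_{j\in N}x_j\bar r^j:x_j\ge0\}$. It is assumed that $\bar x\notin\mathrm{cl}(C)$. For $j\in N$, $\alpha_j=\inf\{\lambda\ge0:\bar x+\lambda\bar r^j\in C\}$ and $\beta_j=\sup\{\lambda\ge0:\bar x+\lambda\bar r^j\in C\}$, with $\alpha_j=+\infty$, $\beta_j=-\infty$ if the halfline misses $C$. The set $N$ is partitioned into - $N_0=\{j:\alpha_j=+\infty,\beta_j=-\infty\}$, - $N_1=\{j:\alpha_j\in(0,\infty),\beta_j=+\infty\}$, - $N_2=\{j:\alpha_j\in(0,\infty),\beta_j\in(\alpha_j,\infty)\}$.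 For a set $K$, $\mathrm{recc}(K)=\{d:x+\lambda d\in K\ \forall x\in K,\lambda\ge0\}$. For $k\in N_2$, $S_k^C=\{\bar x\}+\mathrm{conv}\big(\bigcup_{j\in N_2}\{\lambda\bar r^j:0\le\lambda<\beta_j\}\big)+\{\lambda\bar r^k:\lambda\le0\}+\mathrm{recc}(C)$, and $J=\{i\in N:\bar r^i\in\mathrm{recc}(S_k^C)\}$. *)

(* Defs.v *)
From HB Require Import structures.
From mathcomp Require Import all_boot all_order all_algebra.
From mathcomp Require Import all_classical all_reals all_analysis.
Set Implicit Arguments. Unset Strict Implicit. Unset Printing Implicit Defensive.
Import Order.TTheory GRing.Theory Num.Theory.
Import numFieldNormedType.Exports.
Local Open Scope classical_set_scope.
Local Open Scope ring_scope.

Section LPDefs.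
Variables (R : realType) (m n : nat).

Definition recc (K : set 'cV[R]_n) : set 'cV[R]_n :=
  [set d | forall x, K x -> forall l : R, 0 <= l -> K (x + l *: d)].

Definition conv_hull (S : set 'cV[R]_n) : set 'cV[R]_n :=
  \bigcap_(K in [set K : set 'cV[R]_n | convex_set (K : set (convex_lmodType 'cV[R]_n)) /\ S `<=` K]) K.

Definition msum (X Y : set 'cV[R]_n) : set 'cV[R]_n :=
  [set x + y | x in X & y in Y].

Definition polyP (A : 'M[R]_(m, n)) (b : 'cV[R]_m) : set 'cV[R]_n :=
  [set x | A *m x = b /\ forall i, 0 <= x i 0].

(* An ordered basis is an injective f : 'I_m -> 'I_n whose columns of A
   form an invertible matrix; B is its image. *)
Definition basis_mx (A : 'M[R]_(m, n)) (f : 'I_m -> 'I_n) : 'M[R]_m :=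
  colsub f A.

Definition Bset (f : 'I_m -> 'I_n) : {set 'I_n} := [set f l | l : 'I_m].

(* bbar = A_B^{-1} b,  Abar = A_B^{-1} A  (entry (l,j) is abar_{f l, j}) *)
Definition bbar (A : 'M[R]_(m, n)) (b : 'cV[R]_m) f : 'cV[R]_m :=
  invmx (basis_mx A f) *m b.
Definition Abar (A : 'M[R]_(m, n)) f : 'M[R]_(m, n) :=
  invmx (basis_mx A f) *m A.

Definition xbar (A : 'M[R]_(m, n)) (b : 'cV[R]_m) f : 'cV[R]_n :=
  \col_(i < n) (if [pick l | f l == i] is Some l then bbar A b f l 0 else 0).

Definition rbar (A : 'M[R]_(m, n)) f (j : 'I_n) : 'cV[R]_n :=
  \col_(k < n) (if [pick l | f l == k] is Some l then - Abar A f l j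
                else if k == j then 1 else 0).

Definition polyPB (A : 'M[R]_(m, n)) (b : 'cV[R]_m) f : set 'cV[R]_n :=
  [set x | A *m x = b /\ forall i, i \notin Bset f -> 0 <= x i 0].

Definition hl_params (A : 'M[R]_(m, n)) (b : 'cV[R]_m) f (C : set 'cV[R]_n) j
  : set R := [set l | 0 <= l /\ C (xbar A b f + l *: rbar A f j)].

(* alpha_j = inf, beta_j = sup; ereal_inf set0 = +oo, ereal_sup set0 = -oo *)
Definition alpha A b f C j : \bar R :=
  ereal_inf [set l%:E | l in hl_params A b f C j].
Definition beta A b f C j : \bar R :=
  ereal_sup [set l%:E | l in hl_params A b f C j].

Local Open Scope ereal_scope.
Definition N0 A b f C : set 'I_n :=
  [set j | j \notin Bset f /\ alpha A b f C j = +oo /\ beta A b f C j = -oo].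
Definition N1 A b f C : set 'I_n :=
  [set j | j \notin Bset f /\ 0 < alpha A b f C j < +oo /\ beta A b f C j = +oo].
Definition N2 A b f C : set 'I_n :=
  [set j | j \notin Bset f /\ 0 < alpha A b f C j < +oo /\
           alpha A b f C j < beta A b f C j < +oo].
Local Close Scope ereal_scope.

Definition SkC A b f (C : set 'cV[R]_n) (k : 'I_n) : set 'cV[R]_n :=
  msum (msum (msum [set xbar A b f]
    (conv_hull (\bigcup_(j in N2 A b f C)
        [set l *: rbar A f j | l in [set l : R | 0 <= l /\ (l%:E < beta A b f C j)%E]])))
    [set l *: rbar A f k | l in [set l : R | l <= 0]])
    (recc C).

Definition Jset A b f C k : set 'I_n :=
  [set i | i \notin Bset f /\ recc (SkC A b f C k) (rbar A f i)].

End LPDefs.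

(* Main.v *)
Require Import Defs.
From HB Require Import structures.
From mathcomp Require Import all_boot all_order all_algebra.
From mathcomp Require Import all_classical all_reals all_analysis.
From mathcomp Require Import ring lra.
Import Order.TTheory GRing.Theory Num.Theory.
Import numFieldNormedType.Exports.
Local Open Scope classical_set_scope.
Local Open Scope ring_scope.

Lemma near_line (R : realType) n (x v : 'cV[R]_n) (P : set 'cV[R]_n) :
  nbhs x P -> exists2 e : R, 0 < e & forall s, `|s| < e -> P (x + s *: v).
Proof.
move=> /nbhs_ballP [e0 /= e00 hb].
exists (e0 / (`|v| + 1)).
  by apply: divr_gt0 => //; apply: ltr_wpDl.
move=> s hs; apply: hb; rewrite -ball_normE /= opprD addrA subrr add0r normrN mx_normZ.
have h1 : 0 < `|v| + 1 by apply: ltr_wpDl.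
rewrite ltr_pdivlMr // in hs.
apply: le_lt_trans hs; apply: ler_wpM2l => //; lra.
Qed.

Lemma convex2 (R : realType) n (C : set 'cV[R]_n) (x y : 'cV[R]_n) (t : R) :
  convex_set (C : set (convex_lmodType 'cV[R]_n)) -> C x -> C y -> 0 <= t -> t <= 1 ->
  C (t *: x + (1 - t) *: y).
Proof.
move=> hc Cx Cy t0 t1.
have := hc x y (Itv01 t0 t1) (mem_set Cx) (mem_set Cy).
by rewrite inE.
Qed.

Lemma fin_choice (R : realType) n (Q : 'I_n -> R -> Prop) :
  (forall j, exists2 e, 0 < e & forall e', 0 < e' -> e' <= e -> Q j e') ->
  exists2 e, 0 < e & forall j e', 0 < e' -> e' <= e -> Q j e'.
Proof.
move=> h.
suff H : forall s : seq 'I_n, exists2 e, 0 < e &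
    forall j, j \in s -> forall e', 0 < e' -> e' <= e -> Q j e'.
  have [e e0 he] := H (enum 'I_n).
  by exists e => // j e' h1 h2; apply: he => //; rewrite mem_enum.
elim=> [|j s [e e0 he]]; first by exists 1.
have [ej ej0 hej] := h j.
exists (Num.min e ej); first by rewrite lt_min e0 ej0.
move=> i; rewrite inE => /orP [/eqP ->|his] e' h1 h2.
  by apply: hej => //; apply: le_trans h2 _; rewrite ge_min lexx orbT.
by apply: he => //; apply: le_trans h2 _; rewrite ge_min lexx.
Qed.
Arguments near_line {R n x} v {P}.
Arguments convex2 {R n C x y t}.

Lemma open_nbhs' (R : realType) n (C : set 'cV[R]_n) x : open C -> C x -> nbhs x C.
Proof. by rewrite openE => /(_ x) h /h. Qed.
Arguments open_nbhs' {R n C x}.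

Lemma recc_unb (R : realType) n (C : set 'cV[R]_n) (xb r : 'cV[R]_n) :
  open C -> convex_set (C : set (convex_lmodType 'cV[R]_n)) ->
  (forall M, exists l, (0 <= l /\ C (xb + l *: r)) /\ M < l) -> recc C r.
Proof.
move=> hop hcv hunb x Cx l l0.
have [->|lpos] := eqVneq l 0; first by rewrite scale0r addr0.
have {l0 lpos} lp : 0 < l by rewrite lt_neqAle eq_sym lpos.
have [e e0 he] := near_line (x - xb) (open_nbhs' hop Cx).
have [lam [[lam0 Clam] hlam]] := hunb (2 * l / e + 2 * l).
have h2le : 0 < 2 * l / e by apply: divr_gt0 => //; lra.
have lampos : 0 < lam by lra.
have h2l : 2 * l < lam by lra.
have h2l' : 2 * l / e < lam by lra.
set t := l / lam.
have t0 : 0 < t by apply: divr_gt0.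
have t12 : 2 * t < 1.
  by rewrite /t mulrA ltr_pdivrMr // mul1r.
have t2e : 2 * t < e.
  rewrite /t mulrA ltr_pdivrMr //.
  move: h2l'; rewrite ltr_pdivrMr // => h; lra.
set s := t / (1 - t).
have s0 : 0 <= s by apply: divr_ge0; lra.
have hs : `|s| < e.
  rewrite ger0_norm // /s ltr_pdivrMr; last by lra.
  have h1 : 0 < (e - 2 * t) * (1 - t) by apply: mulr_gt0; lra.
  have h2 : 0 <= t * (1 - 2 * t) by apply: mulr_ge0; lra.
  nra.
have Cw := he s hs.
have := convex2 hcv Cw Clam (_ : 0 <= 1 - t) (_ : 1 - t <= 1).
have -> : (1 - t) *: (x + s *: (x - xb)) + (1 - (1 - t)) *: (xb + lam *: r) = x + l *: r.
  apply/matrixP => i j; rewrite !mxE /s /t.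
  field; lra.
by apply; lra.
Qed.

Theorem corollary2 (R : realType) (m n : nat)
  (A : 'M[R]_(m, n)) (b : 'cV[R]_m) (f : 'I_m -> 'I_n)
  (C : set 'cV[R]_n) (k : 'I_n) :
  \rank A = m ->
  injective f ->
  basis_mx A f \in unitmx ->
  (forall l, 0 <= bbar A b f l 0) ->
  open C ->
  convex_set (C : set (convex_lmodType 'cV[R]_n)) ->
  ~ closure C (xbar A b f) ->
  recc C `<=` recc (polyPB A b f) ->
  N2 A b f C k ->
  N0 A b f C `<=` Jset A b f C k ->
  exists2 eps : R, 0 < eps &
    forall j : 'I_n, j \notin Bset f -> SkC A b f C k (xbar A b f + eps *: rbar A f j).
Proof.
move=> _ _ _ _ hop hcv hncl _ hk hN0J.
set xb := xbar A b f.
have rec0 : recc C 0 by move=> x Cx l _; rewrite scaler0 addr0.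
have inS j l c : N2 A b f C j -> 0 <= l -> (l%:E < beta A b f C j)%E -> recc C c ->
    SkC A b f C k (xb + l *: rbar A f j + c).
  move=> hj l0 lb hc.
  exists (xb + l *: rbar A f j + 0 *: rbar A f k); last first.
    by exists c => //; rewrite scale0r addr0.
  exists (xb + l *: rbar A f j); last first. exists (0 *: rbar A f k) => //. by exists (0:R) => //=; rewrite scale0r.
  exists xb => //; exists (l *: rbar A f j) => //.
  move=> K [_ sub]; apply: sub; exists j => //; exists l => //.
have betak : (0%:E < beta A b f C k)%E.
  case: hk => _ [/andP [a0 _] /andP [ab _]]; exact: lt_trans a0 ab.
have xbS : SkC A b f C k xb.
  by have := inS k 0 0 hk (lexx 0) betak rec0; rewrite scale0r !addr0.
suff H : forall j, exists2 e, 0 < e & forall e', 0 < e' -> e' <= e -> j \notin Bset f -> SkC A b f C k (xb + e' *: rbar A f j).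
  have [e e0 he] := @fin_choice R n (fun j e => j \notin Bset f -> SkC A b f C k (xb + e *: rbar A f j)) H.
  by exists e => // j hj; apply: he.
move=> j.
case: (boolP (j \in Bset f)) => hjB.
  by exists 1 => // e' _ _; rewrite hjB.
case: (pselect (exists l, hl_params A b f C j l)) => [[l0 Hl0] | hne].
- case: (pselect (forall M, exists l, hl_params A b f C j l /\ M < l)) => [hunb | hbd].
    have hrec := @recc_unb R n C xb (rbar A f j) hop hcv hunb.
    exists 1 => // e' e'0 _ _.
    have := inS k 0 (e' *: rbar A f j) hk (lexx 0) betak _.
    rewrite scale0r addr0; apply.
    move=> x Cx l' l'0; rewrite scalerA; apply: hrec => //.
    by apply: mulr_ge0 => //; apply: ltW.
  have [M hM] : exists M, forall l, hl_params A b f C j l -> l <= M.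
    apply: contrapT => hn; apply: hbd => M; apply: contrapT => hn2; apply: hn.
    exists M => l hl; rewrite leNgt; apply/negP => hlt; apply: hn2; by exists l.
  have [c c0 hc] : exists2 c, 0 < c & forall l, hl_params A b f C j l -> c <= l.
    have [B [nB hB]] : exists B, nbhs xb B /\ ~ (C `&` B !=set0).
      apply: contrapT => hn; apply: hncl => B nB; apply: contrapT => h; apply: hn; by exists B.
    have [e e0 he] := near_line (rbar A f j) nB.
    exists e => // l [l0' Cl]; rewrite leNgt; apply/negP => hle; apply: hB.
    exists (xb + l *: rbar A f j); split => //; apply: he; by rewrite ger0_norm.
  have [d d0 hd] := near_line (rbar A f j) (open_nbhs' hop Hl0.2).
  have Hpar : hl_params A b f C j (l0 + d / 2).
    split; first by have := Hl0.1; lra.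
    have := hd (d / 2) _; rewrite -addrA -scalerDl; apply.
    rewrite ger0_norm; lra.
  have betagt : (l0%:E < beta A b f C j)%E.
    apply: (@lt_le_trans _ _ (l0 + d / 2)%:E); first by rewrite lte_fin; lra.
    by apply: ereal_sup_ubound; exists (l0 + d / 2).
  have alphale : (alpha A b f C j <= l0%:E)%E.
    by apply: ereal_inf_lbound; exists l0.
  have alphage : (c%:E <= alpha A b f C j)%E.
    by apply: le_ereal_inf_tmp => _ [l hl <-]; rewrite lee_fin; exact: hc.
  have betale : (beta A b f C j <= M%:E)%E.
    by apply: ge_ereal_sup => _ [l hl <-]; rewrite lee_fin; exact: hM.
  have hN2 : N2 A b f C j.
    split => //; split; apply/andP; split.
    - by apply: lt_le_trans alphage; rewrite lte_fin.
    - by apply: le_lt_trans alphale _; exact: ltry.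
    - exact: le_lt_trans alphale betagt.
    - by apply: le_lt_trans betale _; exact: ltry.
  exists l0; first by apply: lt_le_trans c0 (hc _ Hl0).
  move=> e' e'0 e'l _.
  have := inS j e' 0 hN2 (ltW e'0) _ rec0; rewrite addr0; apply.
  by apply: le_lt_trans betagt; rewrite lee_fin.
- have hj0 : N0 A b f C j.
    have E : [set l%:E | l in hl_params A b f C j] = set0.
      by apply/seteqP; split => // x [l hl _]; exfalso; apply: hne; exists l.
    by split => //; rewrite /alpha /beta E ereal_inf0 ereal_sup0.
  have [_ hrec] := hN0J j hj0.
  exists 1 => // e' e'0 _ _.
  exact: hrec xb xbS e' (ltW e'0).
Qed.
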